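(* Let $\mathbb{F}_q$ be a finite field and $n\geq 1$. Fix any $P_0\in\mathbb{P}^n(\mathbb{F}_q)$ and $P_1,P_2\in\mathbb{P}^1(\mathbb{F}_q)$ with $P_1\neq P_2$. Then there exists a rational map $h\colon \mathbb{P}^n\dashrightarrow\mathbb{P}^1$ defined over $\mathbb{F}_q$ such that $h(P_0)=P_1$ and $h(P)=P_2$ for all $P\in\mathbb{P}^n(\mathbb{F}_q)\setminus\{P_0\}$ (in particular $h$ is defined at every point of $\mathbb{P}^n(\mathbb{F}_q)$). *)

(* Defs.v *)
From HB Require Import structures.
From mathcomp Require Import all_boot all_order all_algebra all_field.
From mathcomp Require Import mpoly.
Set Implicit Arguments. Unset Strict Implicit. Unset Printing Implicit Defensive.
Import GRing.Theory.
Local Open Scope ring_scope.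

(* Points of P^k(F) are represented by nonzero coordinate vectors
   x : 'I_k.+1 -> F (homogeneous coordinates); two vectors represent the
   same point iff they are proportional by a nonzero scalar. *)
Definition nonzero_vec (F : fieldType) (k : nat) (x : 'I_k -> F) : Prop :=
  exists i, x i != 0.

Definition proj_eq (F : fieldType) (k : nat) (x y : 'I_k -> F) : Prop :=
  exists c : F, c != 0 /\ forall i, y i = c * x i.

(* A rational map P^n --> P^1 over F is given by two homogeneous
   polynomials h 0, h 1 in n+1 variables of a common degree d, not both 0.
   Its value at a point x (where defined) is the point [h 0 (x) : h 1 (x)]. *)
Definition rat_map_P1 (F : fieldType) (n : nat) (h : 'I_2 -> {mpoly F[n.+1]}) :
    Prop :=
  (exists d : nat, forall i, h i \is d.-homog) /\ (exists i, h i != 0).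

Definition eval_map (F : fieldType) (n : nat) (h : 'I_2 -> {mpoly F[n.+1]})
    (x : 'I_n.+1 -> F) : 'I_2 -> F :=
  fun i => (h i).@[x].

(* Main.v *)
Require Import Defs.
From HB Require Import structures.
From mathcomp Require Import all_boot all_order all_algebra all_field.
From mathcomp Require Import mpoly.
Import GRing.Theory.
Local Open Scope ring_scope.

Section H.
Variable F : finFieldType.
Variable n : nat.
Local Notation r := (#|F|.-1).

Lemma r_gt0 : (0 < r)%N.
Proof. by rewrite -ltnS (ltn_predK (finNzRing_gt1 F)) finNzRing_gt1. Qed.

Lemma powr (x : F) : x ^+ r = if x == 0 then 0 else 1.
Proof.
case: eqP => [->|/eqP nz]; first by rewrite expr0n eqn0Ngt r_gt0.
apply: (mulfI nz); rewrite -exprS (ltn_predK (finNzRing_gt1 F)) expf_card mulr1 //.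
Qed.

Lemma homXi (i : 'I_n) : ('X_i : {mpoly F[n]}) \is 1.-homog.
Proof. rewrite dhomogX; apply/eqP; exact: mdeg1. Qed.

Lemma hom_prod d k (G : 'I_k -> {mpoly F[n]}) :
  (forall i, G i \is d.-homog) -> \prod_i G i \is (d * k).-homog.
Proof.
elim: k G => [|k IH] G hG; first by rewrite big_ord0 muln0 dhomog1.
by rewrite big_ord_recr mulnS addnC; apply: dhomogM => //; apply: IH.
Qed.

Lemma evalE (x : 'I_n -> F) : nonzero_vec x ->
  (\sum_(i < n) \prod_(k < n) (if (k < i)%N then 'X_i ^+ r - 'X_k ^+ r else 'X_i ^+ r)
     : {mpoly F[n]}).@[x] = 1.
Proof.
case=> i1 Hi1.
rewrite rmorph_sum /=.
have [i0 Hi0 Hmin] := @arg_minnP _ i1 (fun i => x i != 0) val Hi1.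
have Z (k : 'I_n) : (k < i0)%N -> x k = 0.
  move=> lt; apply/eqP; apply: contraTT lt => nz; rewrite -leqNgt; exact: Hmin.
have ev (i k : 'I_n) : (if (k < i)%N then 'X_i ^+ r - 'X_k ^+ r else 'X_i ^+ r : {mpoly F[n]}).@[x]
   = if (k < i)%N then x i ^+ r - x k ^+ r else x i ^+ r.
  by case: ifP => _; rewrite ?mevalB !rmorphXn /= !mevalXU.
rewrite (bigD1 (i0 : 'I_n)) //= [X in _ + X]big1 ?addr0.
  rewrite rmorph_prod big1 // => k _ /=; rewrite ev.
  case: ifP => [lt|_]; last by rewrite powr (negbTE Hi0).
  by rewrite (Z k lt) !powr (negbTE Hi0) eqxx subr0.
move=> i ne; rewrite rmorph_prod /=.
case: (eqVneq (x i) 0) => [xi0|nzi].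
  rewrite (bigD1 i) //= ev ltnn powr xi0 eqxx mul0r //.
have lt : (i0 < i)%N.
  by rewrite ltn_neqAle Hmin // andbT; apply: contra ne => /eqP/val_inj ->.
by rewrite (bigD1 i0) //= ev lt !powr (negbTE Hi0) (negbTE nzi) subrr mul0r.
Qed.

Definition Apol (P0 : 'I_n -> F) (j : 'I_n) : {mpoly F[n]} :=
  \prod_(i < n) ('X_j ^+ r - (P0 j *: 'X_i - P0 i *: 'X_j) ^+ r).

Lemma evA (x P0 : 'I_n -> F) j :
  (Apol P0 j).@[x] = \prod_(i < n) (x j ^+ r - (P0 j * x i - P0 i * x j) ^+ r).
Proof.
rewrite /Apol rmorph_prod; apply: eq_bigr => i _ /=.
by rewrite !mevalB !rmorphXn /= !mevalB !mevalZ !mevalXU.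
Qed.

Lemma evA1 (x P0 : 'I_n -> F) j : P0 j != 0 -> proj_eq x P0 -> (Apol P0 j).@[x] = 1.
Proof.
move=> nz [c [c0 Hc]]; rewrite evA big1 // => i _.
have xj : x j != 0 by apply: contra nz; rewrite Hc => /eqP ->; rewrite mulr0.
by rewrite !Hc mulrAC subrr !powr (negbTE xj) eqxx subr0.
Qed.

Lemma evA0 (x P0 : 'I_n -> F) j : P0 j != 0 -> ~ proj_eq x P0 -> (Apol P0 j).@[x] = 0.
Proof.
move=> nz np; rewrite evA; apply/eqP; apply/negPn/negP => /prodf_neq0 H0.
have H i := H0 i isT.
have xj : x j != 0.
  apply/eqP => xj0; move: (H j); rewrite xj0 mulr0 subrr expr0n eqn0Ngt r_gt0 /=.
  by rewrite subr0 eqxx.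
apply: np; exists (P0 j / x j); split; first by rewrite mulf_neq0 ?invr_eq0.
move=> i; have := H i; rewrite !powr (negbTE xj) /=.
case: (P0 j * x i - P0 i * x j =P 0) => [E _ | _]; last by rewrite subrr eqxx.
move/eqP: E; rewrite subr_eq0 => /eqP E.
by rewrite mulrAC E mulfK.
Qed.
End H.
Arguments homXi F {n}.
Arguments Apol {F n}.
Arguments hom_prod {F n}.

Definition Epol (F : finFieldType) (n : nat) : {mpoly F[n]} :=
  \sum_(i < n) \prod_(k < n)
     (if (k < i)%N then 'X_i ^+ #|F|.-1 - 'X_k ^+ #|F|.-1 else 'X_i ^+ #|F|.-1).

Lemma hXr (F : finFieldType) n (k : 'I_n) :
  ('X_k : {mpoly F[n]}) ^+ #|F|.-1 \is (#|F|.-1).-homog.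
Proof. by have := dhomogMn #|F|.-1 (homXi F k); rewrite mul1n. Qed.

Lemma homA (F : finFieldType) n (P0 : 'I_n -> F) j :
  Apol P0 j \is (#|F|.-1 * n)%N.-homog.
Proof.
apply: hom_prod => i; apply: rpredB; first exact: hXr.
have hL : (P0 j *: 'X_i - P0 i *: 'X_j : {mpoly F[n]}) \is 1.-homog.
  by apply: rpredB; apply: dhomogZ; apply: homXi.
by have := dhomogMn #|F|.-1 hL; rewrite mul1n.
Qed.

Lemma homE (F : finFieldType) n : Epol F n \is (#|F|.-1 * n)%N.-homog.
Proof.
apply: rpred_sum => i _; apply: hom_prod => k.
by case: ifP => _; [apply: rpredB|]; apply: hXr.
Qed.

Theorem lemma2p5 (F : finFieldType) (n : nat) (hn : (1 <= n)%N)
    (P0 : 'I_n.+1 -> F) (P1 P2 : 'I_2 -> F)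
    (hP0 : nonzero_vec P0) (hP1 : nonzero_vec P1) (hP2 : nonzero_vec P2)
    (h12 : ~ proj_eq P1 P2) :
  exists h : 'I_2 -> {mpoly F[n.+1]},
    rat_map_P1 h /\
    forall x : 'I_n.+1 -> F, nonzero_vec x ->
      (proj_eq x P0 -> proj_eq (eval_map h x) P1) /\
      (~ proj_eq x P0 -> proj_eq (eval_map h x) P2).
Proof.
have [j Pj] := hP0.
exists (fun i => (P1 i - P2 i) *: Apol P0 j + P2 i *: Epol F n.+1).
have ev x i : nonzero_vec x ->
   eval_map (fun i => (P1 i - P2 i) *: Apol P0 j + P2 i *: Epol F n.+1) x i
   = (P1 i - P2 i) * (Apol P0 j).@[x] + P2 i.
  by move=> nx; rewrite /eval_map mevalD !mevalZ evalE // mulr1.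
split.
  split.
    exists (#|F|.-1 * n.+1)%N => i; apply: rpredD; apply: dhomogZ.
      exact: homA.
    exact: homE.
  have [i Pi] := hP1; exists i; apply/eqP => h0.
  have := ev P0 i hP0; rewrite /eval_map h0 meval0 evA1 //; last first.
    by exists 1; split; [exact: oner_neq0 | move=> k; rewrite mul1r].
  rewrite mulr1 subrK => E; by rewrite -E eqxx in Pi.
move=> x nx; split => Hx; exists 1; split; try exact: oner_neq0.
  by move=> i; rewrite mul1r ev // evA1 // mulr1 subrK.
by move=> i; rewrite mul1r ev // evA0 // mulr0 add0r.
Qed.
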